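(* Let $G$ be a directed graph with vertices $s,t$ and $k\ge1$. For any $C_1,C_2\in L^*$ we have $|E(C_1\vee C_2)|+|E(C_1\wedge C_2)|\ge|E(C_1)|+|E(C_2)|$.
   Context: An $s$-$t$ cut of a directed graph $G$ is a set $X\subseteq E(G)$ such that removing $X$ leaves no directed $s$-$t$ path; $\Gamma_G(s,t)$ is the set of $s$-$t$ cuts of minimum cardinality. Fix a maximum-size collection $\mathcal P$ of pairwise edge-disjoint directed $s$-$t$ paths (each minimum $s$-$t$ cut contains exactly one edge of each path in $\mathcal P$). For $X,Y\in\Gamma_G(s,t)$, $S_{\min}(X\cup Y)$ (resp. $S_{\max}(X\cup Y)$) consists, for each $p\in\mathcal P$, of the edge of $(X\cup Y)\cap p$ occurring first (resp. last) along $p$. $X\le Y$ means every directed $s$-$t$ path meets an edge of $X$ at or before an edge of $Y$. $U^k_{\mathrm{lr}}$ is the set of $k$-tuples $[X_1,\dots,X_k]$ of elements of $\Gamma_G(s,t)$ with $X_i\le X_j$ for all $i<j$. $L^*$ is the lattice on $U^k_{\mathrm{lr}}$ with componentwise order, join $[X_i]_i\vee[Y_i]_i=[S_{\max}(X_i\cup Y_i)]_i$ and meet $[X_i]_i\wedge[Y_i]_i=[S_{\min}(X_i\cup Y_i)]_i$. For $C=[X_1,\dots,X_k]$, $E(C)=\bigcup_{i=1}^kX_i$. *)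

(* Defs.v *)
From mathcomp Require Import all_boot.
Set Implicit Arguments. Unset Strict Implicit. Unset Printing Implicit Defensive.

Section Graph.
Variables (V E : finType) (src tgt : E -> V).

Fixpoint walkb (x : V) (p : seq E) : bool :=
  match p with
  | [::] => true
  | e :: p' => (src e == x) && walkb (tgt e) p'
  end.

Definition dipath (s t : V) (p : seq E) : bool :=
  [&& walkb s p, last s (map tgt p) == t & uniq (s :: map tgt p)].

Definition st_cut (s t : V) (X : {set E}) : Prop :=
  forall p, dipath s t p -> has (fun e => e \in X) p.

Definition min_st_cut (s t : V) (X : {set E}) : Prop :=
  st_cut s t X /\ forall Y : {set E}, st_cut s t Y -> #|X| <= #|Y|.

Definition disjoint_paths (s t : V) (P : seq (seq E)) : Prop :=
  all (dipath s t) P /\ pairwise (fun p q => ~~ has (fun e => e \in q) p) P.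

Definition max_disjoint_paths (s t : V) (P : seq (seq E)) : Prop :=
  disjoint_paths s t P /\
  forall Q, disjoint_paths s t Q -> size Q <= size P.

Definition cut_le (s t : V) (X Y : {set E}) : Prop :=
  forall p, dipath s t p ->
    find (fun e => e \in X) p <= find (fun e => e \in Y) p.

Definition first_in (A : {set E}) (p : seq E) : option E :=
  ohead [seq e <- p | e \in A].
Definition last_in (A : {set E}) (p : seq E) : option E :=
  ohead (rev [seq e <- p | e \in A]).

Definition S_min (P : seq (seq E)) (A : {set E}) : {set E} :=
  [set e | has (fun p => first_in A p == Some e) P].
Definition S_max (P : seq (seq E)) (A : {set E}) : {set E} :=
  [set e | has (fun p => last_in A p == Some e) P].

Definition U_lr (s t : V) (k : nat) (C : 'I_k -> {set E}) : Prop :=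
  (forall i, min_st_cut s t (C i)) /\
  (forall i j : 'I_k, i < j -> cut_le s t (C i) (C j)).

Definition Ljoin (P : seq (seq E)) (k : nat) (C D : 'I_k -> {set E}) :
  'I_k -> {set E} := fun i => S_max P (C i :|: D i).
Definition Lmeet (P : seq (seq E)) (k : nat) (C D : 'I_k -> {set E}) :
  'I_k -> {set E} := fun i => S_min P (C i :|: D i).

Definition Eset (k : nat) (C : 'I_k -> {set E}) : {set E} :=
  \bigcup_(i < k) C i.

End Graph.

(* Main.v *)
Require Import Defs.
From mathcomp Require Import all_boot zify.
Set Implicit Arguments. Unset Strict Implicit. Unset Printing Implicit Defensive.

Section Main.
Variables (V E : finType) (src tgt : E -> V) (s t : V).

Lemma walk_count x p v : walkb src tgt x p ->
  count (fun e => src e == v) p + (v == last x (map tgt p)) =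
  count (fun e => tgt e == v) p + (v == x).
Proof.
elim: p x => [|e p IH] x /=; first by [].
case/andP=> /eqP <- W.
have := IH _ W. rewrite [tgt e == v]eq_sym [src e == v]eq_sym.
case: (v == src e); case: (v == tgt e) => /=; lia.
Qed.

Lemma dipath_uniq p : dipath src tgt s t p -> uniq p.
Proof. by case/and3P=> _ _ /= /andP[_ /map_uniq]. Qed.

Definition outF (F : {set E}) v := \sum_(e in F) (src e == v : nat).
Definition inF (F : {set E}) v := \sum_(e in F) (tgt e == v : nat).
Definition mflow m F := forall v,
  outF F v + (if v == t then m else 0) = inF F v + (if v == s then m else 0).

Lemma sumU (A B : {set E}) (f : E -> nat) : [disjoint A & B] ->
  \sum_(e in A :|: B) f e = \sum_(e in A) f e + \sum_(e in B) f e.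
Proof.
move=> D; rewrite -bigU //; apply: eq_bigl => e; by rewrite !inE.
Qed.

Lemma sumD (A B : {set E}) (f : E -> nat) : B \subset A ->
  \sum_(e in A) f e = \sum_(e in A :\: B) f e + \sum_(e in B) f e.
Proof.
move=> sBA; rewrite (big_setID B) addnC; congr (_ + _).
apply: eq_bigl => e; rewrite !inE; case: (boolP (e \in B)) => //= eB.
  by rewrite (subsetP sBA).
by rewrite andbF.
Qed.

Lemma sum_seq (r : seq E) (P : pred E) : uniq r ->
  \sum_(e in [set x in r]) (P e : nat) = count P r.
Proof.
move=> U; rewrite (eq_bigl (mem r)); last by move=> e; rewrite inE.
rewrite -big_uniq //. elim: r {U} => [|x r IH]; first by rewrite big_nil.
by rewrite big_cons IH.
Qed.

Lemma mflowU a b (A B : {set E}) : [disjoint A & B] -> mflow a A -> mflow b B -> mflow (a + b) (A :|: B).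
Proof.
move=> D fA fB v; rewrite /outF /inF !sumU // -/(outF A v) -/(outF B v) -/(inF A v) -/(inF B v).
have := fA v; have := fB v; case: (v == t); case: (v == s); lia.
Qed.

Lemma mflow_path p : dipath src tgt s t p -> mflow 1 [set e in p].
Proof.
move=> dp v; rewrite /outF /inF !sum_seq ?(dipath_uniq dp) //.
case/and3P: dp => W /eqP L _; have := walk_count v W; rewrite L.
by case: (v == t); case: (v == s).
Qed.

Lemma mflow0 : mflow 0 set0.
Proof. by move=> v; rewrite /outF /inF !big_set0; case: ifP; case: ifP. Qed.


Definition relQ (Q : pred E) : rel V :=
  fun u v => [exists e, [&& Q e, src e == u & tgt e == v]].

Lemma path_walk (Q : pred E) x vs : path (relQ Q) x vs ->
  exists p, [/\ walkb src tgt x p, map tgt p = vs & all Q p].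
Proof.
elim: vs x => [|y vs IH] x /=; first by exists [::].
case/andP=> /existsP[e /and3P[Qe /eqP se /eqP te]] /IH[p [W M A]].
exists (e :: p); rewrite /= se eqxx te W M Qe A; split => //.
Qed.

Lemma connect_dipath (Q : pred E) : connect (relQ Q) s t ->
  exists p, dipath src tgt s t p /\ all Q p.
Proof.
case/connectP=> vs pth ->; case/shortenP: pth => vs' pth' U _.
case: (path_walk pth') => p [W M A]; exists p; split => //.
by rewrite /dipath W M eqxx U.
Qed.

Lemma sum_eq1 (S : {set V}) x : \sum_(v in S) (x == v : nat) = (x \in S).
Proof.
case: (boolP (x \in S)) => Hx.
  rewrite (bigD1 x) //= eqxx big1 // => v /andP[_ /negbTE]; by rewrite eq_sym => ->.
by rewrite big1 // => v Hv; case: eqP Hx => // ->; rewrite Hv.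
Qed.

Lemma sum_out (F : {set E}) (S : {set V}) :
  \sum_(v in S) outF F v = \sum_(e in F) (src e \in S : nat).
Proof.
rewrite /outF exchange_big /=; apply: eq_bigr => e _; exact: sum_eq1.
Qed.

Lemma sum_in (F : {set E}) (S : {set V}) :
  \sum_(v in S) inF F v = \sum_(e in F) (tgt e \in S : nat).
Proof.
rewrite /inF exchange_big /=; apply: eq_bigr => e _; exact: sum_eq1.
Qed.

Lemma flow_path m F : 0 < m -> mflow m F ->
  exists p, dipath src tgt s t p /\ all (mem F) p.
Proof.
move=> m0 fl; apply: connect_dipath.
set S := [set v | connect (relQ (mem F)) s v].
have sS : s \in S by rewrite inE connect0.
suff : t \in S by rewrite inE.
apply/negPn/negP => tS.
have H1 : \sum_(e in F) (src e \in S : nat) <= \sum_(e in F) (tgt e \in S : nat).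
  apply: leq_sum => e eF; case: (boolP (src e \in S)) => //= sS'.
  rewrite inE in sS'; rewrite inE lt0b; apply: (connect_trans sS' (connect1 _)).
  by apply/existsP; exists e; rewrite !eqxx; apply/andP; split.
rewrite -sum_out -sum_in in H1.
have H2 : \sum_(v in S) outF F v = \sum_(v in S) inF F v + m.
  rewrite (eq_bigr (fun v => inF F v + (if v == s then m else 0))); last first.
    move=> v vS; have := fl v; case: eqP => [vt|_]; first by rewrite -vt vS in tS.
    by rewrite addn0.
  rewrite big_split /=; congr (_ + _).
  rewrite (bigD1 s) //= eqxx big1 ?addn0 // => v /andP[_ /negbTE ->] //.
lia.
Qed.

Lemma decompose m F : mflow m F ->
  exists Q : seq (seq E), [/\ size Q = m, disjoint_paths src tgt s t Q & all (all (mem F)) Q].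
Proof.
elim: m F => [|m IH] F fl; first by exists [::].
case: (flow_path (ltn0Sn m) fl) => p [dp pF].
set F' := F :\: [set e in p].
have sub : [set e in p] \subset F.
  by apply/subsetP => e; rewrite inE => ep; exact: (allP pF).
have fl' : mflow m F'.
  move=> v; have := fl v; have := mflow_path dp v.
  rewrite /outF /inF (sumD _ sub) (sumD (fun e => (tgt e == v : nat)) sub).
  rewrite -/(outF F' v) -/(inF F' v) -/(outF [set e in p] v) -/(inF [set e in p] v).
  case: (v == t); case: (v == s); lia.
case: (IH _ fl') => Q [sQ [dQ pQ] aQ].
exists (p :: Q); split => //=; [by rewrite sQ| |].
  split; first by rewrite /= dp.
  rewrite pairwise_cons pQ andbT; apply/allP => q qQ; apply/hasP => -[e ep eq].
  have := allP (allP aQ q qQ) e eq; by rewrite /F' !inE ep.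
rewrite pF /=; apply/allP => q qQ; apply/allP => e eq.
have := allP (allP aQ q qQ) e eq; by rewrite /F' !inE => /andP[].
Qed.


Definition sfrom (a : E * bool) := if a.2 then src a.1 else tgt a.1.
Definition sto (a : E * bool) := if a.2 then tgt a.1 else src a.1.
Definition okF (F : {set E}) (a : E * bool) := a.2 == (a.1 \notin F).

Fixpoint rwalk (F : {set E}) x (st : seq (E * bool)) :=
  match st with
  | [::] => true
  | a :: st' => [&& sfrom a == x, okF F a & rwalk F (sto a) st']
  end.

Definition resF (F : {set E}) : rel V :=
  fun u v => [exists a : E * bool, [&& okF F a, sfrom a == u & sto a == v]].

Lemma path_rwalk F x vs : path (resF F) x vs ->
  exists st, rwalk F x st /\ map sto st = vs.
Proof.
elim: vs x => [|y vs IH] x /=; first by exists [::].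
case/andP=> /existsP[a /and3P[oa /eqP sa /eqP ta]] /IH[st [W M]].
by exists (a :: st); rewrite /= sa eqxx oa ta W M.
Qed.

Lemma rwalk_ok F x st : rwalk F x st -> all (okF F) st.
Proof. by elim: st x => [|a st IH] x //= /and3P[_ -> /IH]. Qed.

Lemma rwalk_uniq F x st : rwalk F x st -> uniq (x :: map sto st) -> uniq (map fst st).
Proof.
elim: st x => [|a st IH] x //= /and3P[_ oa W] /andP[_ /andP[nA U]].
rewrite (IH _ W) ?andbT /=; last by rewrite nA.
apply/mapP => -[a' a'st ea].
have oa' := allP (rwalk_ok W) a' a'st.
have eqa : a = a'.
  move/eqP: oa; move/eqP: oa' => oa' oa.
  by rewrite [a]surjective_pairing [a']surjective_pairing oa oa' ea.
by move: nA; rewrite eqa (map_f sto a'st).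
Qed.

Lemma rwalk_count F x st v : rwalk F x st ->
  count (fun a => sfrom a == v) st + (v == last x (map sto st)) =
  count (fun a => sto a == v) st + (v == x).
Proof.
elim: st x => [|a st IH] x /=; first by [].
case/and3P=> /eqP <- _ W.
have := IH _ W. rewrite [sto a == v]eq_sym [sfrom a == v]eq_sym.
case: (v == sfrom a); case: (v == sto a) => /=; lia.
Qed.

Lemma count_split (T : Type) (P : pred (T * bool)) (st : seq (T * bool)) :
  count P st = count (fun a => a.2 && P a) st + count (fun a => ~~ a.2 && P a) st.
Proof. elim: st => [|[x [] ] st IH] //=; rewrite IH; lia. Qed.

Lemma sum_steps (st : seq (E * bool)) (b : bool) (f : E -> bool) :
  uniq (map fst st) ->
  \sum_(e in [set e | (e, b) \in st]) (f e : nat) =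
  count (fun a => (a.2 == b) && f a.1) st.
Proof.
move=> U.
have U' : uniq (map fst [seq a <- st | a.2 == b]).
  apply: subseq_uniq U; apply: map_subseq; exact: filter_subseq.
rewrite (eq_bigl (mem [set x in map fst [seq a <- st | a.2 == b]])); last first.
  move=> e; rewrite !inE; apply/idP/mapP => [H|[[e' b'] ] ].
    by exists (e, b) => //; rewrite mem_filter /= eqxx.
  by rewrite mem_filter /= => /andP[/eqP -> ?] ->.
rewrite sum_seq // count_map count_filter; apply: eq_count => a; by rewrite /= andbC.
Qed.

Lemma augment m F st : mflow m F -> rwalk F s st -> last s (map sto st) = t ->
  uniq (map fst st) ->
  mflow m.+1 ((F :\: [set e | (e, false) \in st]) :|: [set e | (e, true) \in st]).
Proof.
move=> fl W L U v.
set Sb := [set e | (e, false) \in st]; set Sf := [set e | (e, true) \in st].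
have ok := rwalk_ok W.
have sub : Sb \subset F.
  apply/subsetP => e; rewrite inE => H; have := allP ok _ H; rewrite /okF /=; by case: (e \in F).
have dis : [disjoint F :\: Sb & Sf].
  rewrite disjoint_sym disjoints_subset; apply/subsetP => e; rewrite !inE => H.
  have := allP ok _ H; rewrite /okF /=; case: (e \in F); by rewrite ?andbF.
have o1 : outF F v = outF (F :\: Sb) v + outF Sb v by rewrite /outF (sumD _ sub).
have i1 : inF F v = inF (F :\: Sb) v + inF Sb v by rewrite /inF (sumD _ sub).
have o2 : outF ((F :\: Sb) :|: Sf) v = outF (F :\: Sb) v + outF Sf v by rewrite /outF sumU.
have i2 : inF ((F :\: Sb) :|: Sf) v = inF (F :\: Sb) v + inF Sf v by rewrite /inF sumU.
have fS : outF Sf v = count (fun a => a.2 && (sfrom a == v)) st.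
  rewrite /outF sum_steps //; apply: eq_count => -[e [] ] //.
have bS : outF Sb v = count (fun a => ~~ a.2 && (sto a == v)) st.
  rewrite /outF sum_steps //; apply: eq_count => -[e [] ] //.
have fT : inF Sf v = count (fun a => a.2 && (sto a == v)) st.
  rewrite /inF sum_steps //; apply: eq_count => -[e [] ] //.
have bT : inF Sb v = count (fun a => ~~ a.2 && (sfrom a == v)) st.
  rewrite /inF sum_steps //; apply: eq_count => -[e [] ] //.
have wc := rwalk_count v W; rewrite L (count_split (fun a => sfrom a == v))
   (count_split (fun a => sto a == v)) in wc.
have fv := fl v; rewrite o1 i1 bS bT in fv; rewrite o2 i2 fS fT.
move: wc fv; case: (v == t); case: (v == s) => /=; lia.
Qed.

Lemma augment' m F : mflow m F -> connect (resF F) s t -> exists F', mflow m.+1 F'.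
Proof.
move=> fl /connectP[vs pth Lt]; move: Lt; case/shortenP: pth => vs' pth' U _ Lt.
case: (path_rwalk pth') => st [W M].
exists ((F :\: [set e | (e, false) \in st]) :|: [set e | (e, true) \in st]).
have U' : uniq (map fst st) by apply: (rwalk_uniq W); rewrite M.
apply: (augment fl W _ U'); by rewrite M Lt.
Qed.


Definition PF (P : seq (seq E)) := [set e | has (fun p => e \in p) P].

Lemma dp_cons p P : disjoint_paths src tgt s t (p :: P) ->
  [/\ dipath src tgt s t p, all (fun q => ~~ has (fun e => e \in q) p) P &
      disjoint_paths src tgt s t P].
Proof. by case=> /= /andP[dp aP] /andP[h1 h2]; split => //; split. Qed.

Lemma PF_flow P : disjoint_paths src tgt s t P -> mflow (size P) (PF P).
Proof.
elim: P => [|p P IH] H.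
  have -> : PF [::] = set0 by apply/setP => e; rewrite !inE.
  exact: mflow0.
case/dp_cons: H => dp aP dP.
have -> : PF (p :: P) = [set e in p] :|: PF P by apply/setP => e; rewrite !inE.
rewrite /= -add1n; apply: mflowU; [|exact: mflow_path|exact: IH].
rewrite -setI_eq0; apply/eqP/setP => e; rewrite !inE.
apply/negbTE/negP => /andP[ep /hasP[q qP eq]].
by have /hasP := allP aP q qP; apply; exists e.
Qed.

Lemma mem_PF P e : e \in PF P -> e \in flatten P.
Proof. rewrite inE => /hasP[q qP eq]; apply/flattenP; by exists q. Qed.

Lemma sumn_le1 (P : seq (seq E)) (f : seq E -> nat) :
  (forall q, q \in P -> f q <= 1) -> sumn (map f P) <= size P.
Proof.
elim: P => [|q P IH] H //=.
have := H q (mem_head _ _); have : sumn (map f P) <= size P.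
  by apply: IH => q' q'P; apply: H; rewrite inE q'P orbT.
lia.
Qed.

Lemma cut_small P : max_disjoint_paths src tgt s t P ->
  exists Y, st_cut src tgt s t Y /\ #|Y| <= size P.
Proof.
case=> dP mP.
set F := PF P; have fl : mflow (size P) F by exact: PF_flow.
set R := [set v | connect (resF F) s v].
have tR : t \notin R.
  apply/negP; rewrite inE => /(augment' fl) [F' /decompose [Q [sQ dQ _]]].
  by have := mP Q dQ; rewrite sQ ltnn.
set Y := [set e in F | (src e \in R) && (tgt e \notin R)].
have back e : e \in F -> tgt e \in R -> src e \in R.
  move=> eF; rewrite !inE => H; apply: (connect_trans H (connect1 _)).
  apply/existsP; exists (e, false); by rewrite /okF /sfrom /sto /= eF !eqxx.
have fwd e : e \notin F -> src e \in R -> tgt e \in R.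
  move=> eF; rewrite !inE => H; apply: (connect_trans H (connect1 _)).
  apply/existsP; exists (e, true); by rewrite /okF /sfrom /sto /= eF !eqxx.
exists Y; split.
  move=> p /and3P[W Lp _].
  have sR : s \in R by rewrite inE connect0.
  elim: p s W Lp sR => [|e p IH] x /=; first by move=> _ /eqP ->; rewrite (negbTE tR).
  case/andP=> /eqP <- W Lp sR.
  case: (boolP (tgt e \in R)) => tR'; first by rewrite (IH _ W Lp tR') orbT.
  case: (boolP (e \in F)) => eF; last by rewrite (fwd e eF sR) in tR'.
  by apply/orP; left; rewrite inE eF sR tR'.
have A0 q x : walkb src tgt x q -> x \notin R -> all (mem F) q ->
    count (fun e => e \in Y) q = 0.
  elim: q x => [|e q IH] x //= /andP[/eqP <- W] xR /andP[eF aq].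
  have tR' : tgt e \notin R by apply/negP => /(back e eF); rewrite (negbTE xR).
  by rewrite (IH _ W tR' aq) /Y inE (negbTE xR) /= andbF.
have A1 q x : walkb src tgt x q -> all (mem F) q -> count (fun e => e \in Y) q <= 1.
  elim: q x => [|e q IH] x //= /andP[/eqP _ W] /andP[eF aq].
  case: (boolP (e \in Y)) => eY /=.
    have tR' : tgt e \notin R by move: eY; rewrite !inE => /and3P[].
    by rewrite (A0 _ _ W tR' aq).
  exact: (IH _ W aq).
have le1 : #|Y| <= count (fun e => e \in Y) (flatten P).
  rewrite cardE -size_filter; apply: uniq_leq_size; first exact: enum_uniq.
  move=> e; rewrite mem_enum => eY; rewrite mem_filter eY /=.
  by apply: mem_PF; move: eY; rewrite inE => /andP[].
apply: (leq_trans le1); rewrite count_flatten; apply: sumn_le1 => q qP.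
case: dP => /allP /(_ q qP) /and3P[W _ _] _.
apply: (A1 _ _ W); apply/allP => e eq; rewrite /= inE; apply/hasP; by exists q.
Qed.


Lemma uniq_flatten P : disjoint_paths src tgt s t P -> uniq (flatten P).
Proof.
elim: P => [|p P IH] //= /dp_cons[dp aP dP].
rewrite cat_uniq (dipath_uniq dp) (IH dP) andbT /=.
apply/hasP => -[e /flattenP[q qP eq] ep].
by have /hasP := allP aP q qP; apply; exists e.
Qed.

Lemma sumn_ge (P : seq (seq E)) (f : seq E -> nat) :
  (forall q, q \in P -> 1 <= f q) -> size P <= sumn (map f P).
Proof.
elim: P => [|r P IH] H //=.
have := H r (mem_head _ _).
have : size P <= sumn (map f P) by apply: IH => x xP; apply: H; rewrite inE xP orbT.
lia.
Qed.

Lemma sumn_eq1 (P : seq (seq E)) (f : seq E -> nat) :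
  (forall q, q \in P -> 1 <= f q) -> sumn (map f P) <= size P ->
  forall q, q \in P -> f q = 1.
Proof.
elim: P => [|q P IH] H //= Hs q'; rewrite inE => /orP[/eqP ->|q'P].
  have : size P <= sumn (map f P) by apply: sumn_ge => x xP; apply: H; rewrite inE xP orbT.
  have := H q (mem_head _ _); lia.
apply: IH => //; first by move=> x xP; apply: H; rewrite inE xP orbT.
have := H q (mem_head _ _); lia.
Qed.

Lemma mincut_one P X : max_disjoint_paths src tgt s t P -> min_st_cut src tgt s t X ->
  (forall q, q \in P -> count (fun e => e \in X) q = 1) /\ {subset X <= flatten P}.
Proof.
move=> mP [cX mX].
case: (cut_small mP) => Y [cY sY]; have sX := leq_trans (mX Y cY) sY.
case: mP => dP _.
have U := uniq_flatten dP.
have ge1 q : q \in P -> 1 <= count (fun e => e \in X) q.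
  move=> qP; rewrite -has_count; apply: cX; by case: dP => /allP /(_ q qP).
have cle : count (fun e => e \in X) (flatten P) <= #|X|.
  rewrite -size_filter cardE; apply: uniq_leq_size; first exact: filter_uniq.
  by move=> e; rewrite mem_filter mem_enum => /andP[].
have one : forall q, q \in P -> count (fun e => e \in X) q = 1.
  apply: sumn_eq1 => //; rewrite -count_flatten; exact: leq_trans cle sX.
split => // x xX; apply/negPn/negP => xP.
have cle' : count (fun e => e \in X) (flatten P) <= #|X :\ x|.
  rewrite -size_filter cardE; apply: uniq_leq_size; first exact: filter_uniq.
  move=> e; rewrite mem_filter mem_enum !inE => /andP[eX eP]; rewrite eX andbT.
  by apply/eqP => ex; rewrite -ex eP in xP.
have := cardsD1 x X; rewrite xX.
have : size P <= count (fun e => e \in X) (flatten P).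
  by rewrite count_flatten; apply: sumn_ge.
lia.
Qed.

End Main.

Lemma nd_step (I : eqType) (h : I -> nat) i j r :
  all (fun l => h i <= h l) (j :: r) -> all (fun l => h j <= h l) r ->
  size (undup (map h (i :: j :: r))) = (h i != h j) + size (undup (map h (j :: r))).
Proof.
move=> A1 aj; move: A1; rewrite [all _ (j :: r)]/= => /andP[hij ai].
have E : (h i \in map h (j :: r)) = (h i == h j).
  rewrite /= inE; case: eqP => //= ne; apply/negP => /mapP[l lr el].
  have := allP aj l lr; have := allP ai l lr; lia.
have -> : undup (map h (i :: j :: r)) =
  if h i \in map h (j :: r) then undup (map h (j :: r)) else h i :: undup (map h (j :: r)) by [].
rewrite E; case: eqP => //=.
Qed.

Lemma nd_ineq (a b c d : nat) : a <= b -> c <= d ->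
  (a != b) + (c != d) <= (maxn a c != maxn b d) + (minn a c != minn b d).
Proof. move=> *. case: eqP; case: eqP; case: eqP; case: eqP => /=; lia. Qed.

Lemma nd_comb (I : eqType) (f g : I -> nat) r i :
  pairwise (fun x y => (f x <= f y) && (g x <= g y)) (i :: r) ->
  size (undup (map f (i :: r))) + size (undup (map g (i :: r))) <=
  size (undup (map (fun x => maxn (f x) (g x)) (i :: r))) +
  size (undup (map (fun x => minn (f x) (g x)) (i :: r))).
Proof.
elim: r i => [|j r IH] i; first by [].
rewrite pairwise_cons => /andP[ai pr].
have pr' := pr; rewrite pairwise_cons in pr'; case/andP: pr' => aj _.
have hf : all (fun l => f i <= f l) (j :: r) by apply: sub_all ai => l /andP[].
have hg : all (fun l => g i <= g l) (j :: r) by apply: sub_all ai => l /andP[].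
have hf' : all (fun l => f j <= f l) r by apply: sub_all aj => l /andP[].
have hg' : all (fun l => g j <= g l) r by apply: sub_all aj => l /andP[].
have hM : forall x, all (fun l => f x <= f l) (j :: r) -> all (fun l => g x <= g l) (j :: r) ->
   all (fun l => maxn (f x) (g x) <= maxn (f l) (g l)) (j :: r).
  move=> x A1 A2; apply/allP => l lr; have := allP A1 l lr; have := allP A2 l lr; lia.
have hm : forall x, all (fun l => f x <= f l) (j :: r) -> all (fun l => g x <= g l) (j :: r) ->
   all (fun l => minn (f x) (g x) <= minn (f l) (g l)) (j :: r).
  move=> x A1 A2; apply/allP => l lr; have := allP A1 l lr; have := allP A2 l lr; lia.
have hM' : all (fun l => maxn (f j) (g j) <= maxn (f l) (g l)) r.
  apply/allP => l lr; have := allP hf' l lr; have := allP hg' l lr; lia.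
have hm' : all (fun l => minn (f j) (g j) <= minn (f l) (g l)) r.
  apply/allP => l lr; have := allP hf' l lr; have := allP hg' l lr; lia.
rewrite (nd_step hf hf') (nd_step hg hg').
rewrite (nd_step (h := fun x => maxn (f x) (g x)) (hM i hf hg) hM').
rewrite (nd_step (h := fun x => minn (f x) (g x)) (hm i hf hg) hm').
have := IH j pr; have := @nd_ineq (f i) (f j) (g i) (g j).
move: hf hg => /= /andP[-> _] /andP[-> _] /(_ isT isT); lia.
Qed.

Lemma map_index_iota (T : eqType) (p : seq T) : uniq p ->
  map (index^~ p) p = iota 0 (size p).
Proof.
elim: p => [|x p IH] //= /andP[xp U].
rewrite eqxx; congr (_ :: _).
rewrite -(addn0 1) iotaDl -IH // -map_comp; apply/eq_in_map => y yp /=.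
by case: (x =P y) => // exy; rewrite exy yp in xp.
Qed.

Lemma count_iota (r : seq nat) n : all (fun x => x < n) r ->
  count (mem r) (iota 0 n) = size (undup r).
Proof.
move=> ar; rewrite -size_filter; apply: perm_size; apply: uniq_perm.
- exact: filter_uniq (iota_uniq _ _).
- exact: undup_uniq.
move=> x; rewrite mem_filter mem_undup mem_iota /= add0n.
by case: (boolP (x \in r)) => // xr; rewrite (allP ar x xr).
Qed.

Lemma index_rev (T : eqType) (p : seq T) e : uniq p -> e \in p ->
  index e (rev p) = size p - (index e p).+1.
Proof.
move=> U ep; have ip : index e p < size p by rewrite index_mem.
have lt : size p - (index e p).+1 < size p by lia.
have := nth_rev e lt.
have -> : size p - (size p - (index e p).+1).+1 = index e p by lia.
rewrite nth_index // => H.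
rewrite -{1}H index_uniq // ?rev_uniq // ?size_rev //.
Qed.

Lemma ohead_filter (T : eqType) (a : pred T) (q : seq T) x0 :
  ohead (filter a q) = if has a q then Some (nth x0 q (find a q)) else None.
Proof. elim: q => [|x q IH] //=; case: (a x) => //=. Qed.

Lemma first_in_eq (E : finType) (A : {set E}) (q : seq E) e : uniq q -> e \in q ->
  (first_in A q == Some e) = (index e q == find (mem A) q).
Proof.
move=> U eq; rewrite /first_in (ohead_filter _ _ e).
case: (boolP (has (mem A) q)) => H.
  rewrite has_find in H.
  apply/eqP/eqP => [[H'] | H']; last by rewrite -H' nth_index.
  by rewrite -H' index_uniq.
apply/esym/negbTE; rewrite has_find -leqNgt in H.
by apply/eqP => H'; move: H; rewrite -H' leqNgt index_mem eq.
Qed.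

Lemma last_first (E : finType) (A : {set E}) (q : seq E) :
  last_in A q = first_in A (rev q).
Proof. by rewrite /last_in /first_in filter_rev. Qed.

Lemma find_two (T : eqType) (a : pred T) (q : seq T) i j (x0 : T) :
  uniq q -> i < size q -> j < size q ->
  (forall e, e \in q -> a e = (index e q == i) || (index e q == j)) ->
  find a q = minn i j.
Proof.
move=> U iq jq H.
have ai : a (nth x0 q i) by rewrite H ?mem_nth // index_uniq // eqxx.
have aj : a (nth x0 q j) by rewrite H ?mem_nth // index_uniq // eqxx orbT.
have f1 : find a q <= i by rewrite leqNgt; apply/negP => /(before_find x0); rewrite ai.
have f2 : find a q <= j by rewrite leqNgt; apply/negP => /(before_find x0); rewrite aj.
have hq : has a q by apply/hasP; exists (nth x0 q i); rewrite ?mem_nth.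
have fs : find a q < size q by rewrite -has_find.
have := nth_find x0 hq; rewrite H ?mem_nth // index_uniq //.
case/orP => /eqP; lia.
Qed.

Section Main2.
Variables (V E : finType) (src tgt : E -> V) (s t : V).

Lemma ohead_mem (T : eqType) (l : seq T) e : ohead l = Some e -> e \in l.
Proof. by case: l => //= x l [->]; rewrite mem_head. Qed.

Lemma same_path P p q e : disjoint_paths src tgt s t P -> p \in P -> q \in P ->
  e \in p -> e \in q -> p = q.
Proof.
elim: P => [|r P IH] // /dp_cons[dr aP dP].
rewrite !inE => /orP[/eqP ->|pP] /orP[/eqP ->|qP] ep eq //.
- by have /hasP := allP aP q qP; case; exists e.
- by have /hasP := allP aP p pP; case; exists e.
- exact: IH.
Qed.

Lemma S_max_mem P (A : {set E}) p e : disjoint_paths src tgt s t P -> p \in P -> e \in p ->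
  (e \in S_max P A) = (last_in A p == Some e).
Proof.
move=> dP pP ep; rewrite inE; apply/hasP/idP => [[q qP /eqP H] | H]; last by exists p.
have eq : e \in q by move/ohead_mem: H; rewrite mem_rev mem_filter => /andP[].
by rewrite (same_path dP pP qP ep eq) H.
Qed.

Lemma S_min_mem P (A : {set E}) p e : disjoint_paths src tgt s t P -> p \in P -> e \in p ->
  (e \in S_min P A) = (first_in A p == Some e).
Proof.
move=> dP pP ep; rewrite inE; apply/hasP/idP => [[q qP /eqP H] | H]; last by exists p.
have eq : e \in q by move/ohead_mem: H; rewrite mem_filter => /andP[].
by rewrite (same_path dP pP qP ep eq) H.
Qed.

Lemma one_idx (A : {set E}) p : uniq p -> count (fun e => e \in A) p = 1 ->
  find (fun e => e \in A) p < size p /\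
  forall e, e \in p -> (e \in A) = (index e p == find (fun e => e \in A) p).
Proof.
move=> U c1.
have hA : has (fun e => e \in A) p by rewrite has_count c1.
split; first by rewrite -has_find.
move=> e ep; apply/idP/eqP => [eA | H]; last first.
  by rewrite -(nth_index e ep) H; apply: (nth_find e hA).
have : size (filter (fun e => e \in A) p) = 1 by rewrite size_filter.
case H: (filter _ p) => [|x [|y l]] //= _.
have m1 : e \in [:: x] by rewrite -H mem_filter eA ep.
have m2 : nth e p (find (fun e => e \in A) p) \in [:: x].
  rewrite -H mem_filter (nth_find e hA) mem_nth //; by rewrite -has_find.
move: m1 m2; rewrite !inE => /eqP -> /eqP <-.
by rewrite index_uniq // -has_find.
Qed.


Lemma cntE k (D : 'I_k -> {set E}) (d : 'I_k -> nat) p : uniq p ->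
  (forall i, d i < size p) ->
  (forall i e, e \in p -> (e \in D i) = (index e p == d i)) ->
  count (fun e => e \in Eset D) p = size (undup (map d (enum 'I_k))).
Proof.
move=> U Hd HD.
rewrite -(count_iota (r := map d (enum 'I_k)) (n := size p)); last first.
  by apply/allP => x /mapP[i _ ->].
rewrite -(map_index_iota U) count_map; apply: eq_in_count => e ep /=.
rewrite /Eset; apply/bigcupP/mapP => [[i _ eD] | [i _ H]].
  by exists i; rewrite ?mem_enum //; apply/eqP; rewrite -HD.
by exists i => //; rewrite HD // H eqxx.
Qed.

Lemma per_path k P (C1 C2 : 'I_k -> {set E}) p :
  max_disjoint_paths src tgt s t P -> U_lr src tgt s t C1 -> U_lr src tgt s t C2 ->
  p \in P ->
  count (fun e => e \in Eset C1) p + count (fun e => e \in Eset C2) p <=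
  count (fun e => e \in Eset (Ljoin P C1 C2)) p + count (fun e => e \in Eset (Lmeet P C1 C2)) p.
Proof.
move=> mP [m1 o1] [m2 o2] pP.
have dP := mP.1.
have dp : dipath src tgt s t p by case: dP => /allP /(_ p pP).
have U := dipath_uniq dp.
set a := fun i => find (fun e => e \in C1 i) p.
set b := fun i => find (fun e => e \in C2 i) p.
have Ha i : a i < size p /\ forall e, e \in p -> (e \in C1 i) = (index e p == a i).
  apply: one_idx U _; exact: (mincut_one mP (m1 i)).1.
have Hb i : b i < size p /\ forall e, e \in p -> (e \in C2 i) = (index e p == b i).
  apply: one_idx U _; exact: (mincut_one mP (m2 i)).1.
have HU i e : e \in p -> (e \in C1 i :|: C2 i) = (index e p == a i) || (index e p == b i).
  by move=> ep; rewrite inE (Ha i).2 // (Hb i).2.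
rewrite (cntE U (fun i => (Ha i).1) (fun i => (Ha i).2)).
rewrite (cntE U (fun i => (Hb i).1) (fun i => (Hb i).2)).
have Hmax : forall i, maxn (a i) (b i) < size p.
  by move=> i; have := (Ha i).1; have := (Hb i).1; lia.
have Hmin : forall i, minn (a i) (b i) < size p.
  by move=> i; have := (Ha i).1; have := (Hb i).1; lia.
rewrite (@cntE k (Ljoin P C1 C2) (fun i => maxn (a i) (b i)) p U Hmax); last first.
  move=> i e ep; rewrite /Ljoin (S_max_mem _ dP pP ep) last_first.
  have ep' : e \in rev p by rewrite mem_rev.
  have Ur : uniq (rev p) by rewrite rev_uniq.
  rewrite (first_in_eq _ Ur ep') (index_rev U ep).
  have ha := (Ha i).1; have hb := (Hb i).1.
  have hi : index e p < size p by rewrite index_mem.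
  rewrite (@find_two _ _ (rev p) (size p - (a i).+1) (size p - (b i).+1) e Ur);
    rewrite ?size_rev; try lia.
  move=> e' e'p; rewrite mem_rev in e'p; rewrite (index_rev U e'p).
  have -> : mem (C1 i :|: C2 i) e' = (e' \in C1 i :|: C2 i) by []. rewrite HU //.
  have := index_mem e' p; rewrite e'p => hi'.
  have h1 : (size p - (index e' p).+1 == size p - (a i).+1) = (index e' p == a i).
    by apply/eqP/eqP; lia.
  have h2 : (size p - (index e' p).+1 == size p - (b i).+1) = (index e' p == b i).
    by apply/eqP/eqP; lia.
  by rewrite h1 h2.
rewrite (@cntE k (Lmeet P C1 C2) (fun i => minn (a i) (b i)) p U Hmin); last first.
  move=> i e ep; rewrite /Lmeet (S_min_mem _ dP pP ep) (first_in_eq _ U ep).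
  rewrite (@find_two _ _ p (a i) (b i) e U (Ha i).1 (Hb i).1) //.
  exact: HU.
case E0 : (enum 'I_k) => [|i r] //.
apply: nd_comb; rewrite -E0.
have pw : pairwise (fun i j : 'I_k => i < j) (enum 'I_k).
  have := iota_ltn_sorted 0 k; rewrite -val_enum_ord (sorted_pairwise ltn_trans).
  by rewrite pairwise_map.
apply: sub_pairwise pw => x y xy; apply/andP; split.
  exact: (o1 x y xy p dp).
exact: (o2 x y xy p dp).
Qed.

End Main2.

Lemma card_eq_count (E : finType) (A : {set E}) l : uniq l -> {subset A <= l} ->
  #|A| = count (fun e => e \in A) l.
Proof.
move=> U sub; rewrite -size_filter -(card_uniqP (filter_uniq _ U)).
apply: eq_card => e; rewrite mem_filter.
case: (boolP (e \in A)) => eA /=; last by []. by rewrite (sub e eA).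
Qed.

Lemma count_le_card (E : finType) (A : {set E}) l : uniq l ->
  count (fun e => e \in A) l <= #|A|.
Proof.
move=> U; rewrite -size_filter -(card_uniqP (filter_uniq _ U)).
by apply: subset_leq_card; apply/subsetP => e; rewrite mem_filter => /andP[].
Qed.

Lemma sumn2 (T : eqType) (P : seq T) (f1 f2 g1 g2 : T -> nat) :
  (forall q, q \in P -> f1 q + f2 q <= g1 q + g2 q) ->
  sumn (map f1 P) + sumn (map f2 P) <= sumn (map g1 P) + sumn (map g2 P).
Proof.
elim: P => [|q P IH] H //=.
have := H q (mem_head _ _).
have : sumn (map f1 P) + sumn (map f2 P) <= sumn (map g1 P) + sumn (map g2 P).
  by apply: IH => x xP; apply: H; rewrite inE xP orbT.
lia.
Qed.

Unset Implicit Arguments.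
Theorem claim2 (V E : finType) (src tgt : E -> V) (s t : V) (k : nat)
  (P : seq (seq E)) (C1 C2 : 'I_k -> {set E}) :
  1 <= k ->
  max_disjoint_paths src tgt s t P ->
  U_lr src tgt s t C1 -> U_lr src tgt s t C2 ->
  #|Eset (Ljoin P C1 C2)| + #|Eset (Lmeet P C1 C2)|
    >= #|Eset C1| + #|Eset C2|.
Proof.
move=> _ mP u1 u2.
have U := uniq_flatten mP.1.
have sub (C : 'I_k -> {set E}) : U_lr src tgt s t C -> {subset Eset C <= flatten P}.
  move=> [m _] e /bigcupP[i _ eC]; exact: (mincut_one mP (m i)).2.
rewrite (card_eq_count U (sub _ u1)) (card_eq_count U (sub _ u2)).
apply: (leq_trans _ (leq_add (count_le_card _ U) (count_le_card _ U))).
rewrite !count_flatten; apply: sumn2 => q qP.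
exact: per_path mP u1 u2 qP.
Qed.
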